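(* Let $D=(V,A)$ be a Steiner rooted $k$-arc-connected directed graph with root $r\in V$ and terminal set $S\subseteq V\setminus\{r\}$. (a) Let $s\in S$ and let $\mathcal{U}$ be a nonempty family of tight $s$-cuts. Then both $\bigcap_{U\in\mathcal{U}}U$ and $\bigcup_{U\in\mathcal{U}}U$ are tight $s$-cuts. (b) Let $S'\subseteq S$ be nonempty and, for each $s\in S'$, let $U_s$ be a tight $s$-cut. Suppose there is $s_0\in S'$ such that the number of arcs leaving $U_s\cup U_{s_0}$ is at least $k$ for all $s\in S'\setminus\{s_0\}$. Then $\bigcap_{s\in S'}U_s$ is a tight $s$-cut for every $s\in S'$.
   Context: $D$ is Steiner rooted $k$-arc-connected if for every $s\in S$ there are $k$ pairwise arc-disjoint directed $r$-$s$ paths. For $s\in S$, $U\subseteq V$ is an $s$-cut if $r\in U$ and $s\notin U$, and a tight $s$-cut if moreover exactly $k$ arcs of $D$ leave $U$. *)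

(* Defs.v *)
From mathcomp Require Import all_boot.
Set Implicit Arguments. Unset Strict Implicit. Unset Printing Implicit Defensive.

(* A directed (multi)graph D = (V, A): finite vertex type V, finite arc type A,
   each arc a goes from [tl a] to [hd a]. Parallel arcs are allowed. *)

Section Digraph.
Variables (V A : finType) (tl hd : A -> V).

Fixpoint is_walk (u v : V) (p : seq A) : bool :=
  match p with
  | [::] => u == v
  | a :: q => (tl a == u) && is_walk (hd a) v q
  end.

Definition is_dpath (u v : V) (p : seq A) : bool :=
  is_walk u v p && uniq (u :: map hd p).

Definition steiner_rooted_k_arc_connected (k : nat) (r : V) (S : {set V}) : Prop :=
  forall s, s \in S ->
    exists P : 'I_k -> seq A,
      (forall i, is_dpath r s (P i)) /\
      (forall i j, i != j -> forall a, a \in P i -> a \notin P j).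

Definition dout (U : {set V}) : nat :=
  #|[set a : A | (tl a \in U) && (hd a \notin U)]|.

Definition s_cut (r s : V) (U : {set V}) : bool := (r \in U) && (s \notin U).

Definition tight_s_cut (k : nat) (r s : V) (U : {set V}) : bool :=
  s_cut r s U && (dout U == k).

End Digraph.

(* Main.v *)
Require Import Defs.
From mathcomp Require Import all_boot.
Set Implicit Arguments. Unset Strict Implicit.

Section Aux.
Variables (V A : finType) (tl hd : A -> V).

Lemma doutE (U : {set V}) :
  dout tl hd U = \sum_a ((tl a \in U) && (hd a \notin U) : nat).
Proof.
rewrite /dout -sum1_card big_mkcond /=; apply: eq_bigr => a _.
by rewrite inE; case: (_ && _).
Qed.

Lemma dout_sub (X Y : {set V}) :
  dout tl hd (X :&: Y) + dout tl hd (X :|: Y) <= dout tl hd X + dout tl hd Y.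
Proof.
rewrite !doutE -!big_split /=; apply: leq_sum => a _; rewrite !inE.
by case: (tl a \in X); case: (tl a \in Y); case: (hd a \in X); case: (hd a \in Y).
Qed.

Lemma walk_cross (U : {set V}) p : forall u v, is_walk tl hd u v p ->
  u \in U -> v \notin U -> exists2 a, a \in p & (tl a \in U) && (hd a \notin U).
Proof.
elim: p => [|a p IH] u v /=.
  by move=> /eqP -> ->.
move=> /andP [/eqP ta hw] uU vU.
case hU: (hd a \in U).
  by have [b bp hb] := IH _ _ hw hU vU; exists b => //; rewrite inE bp orbT.
by exists a; rewrite ?inE ?eqxx // ta uU hU.
Qed.

Lemma cut_lb k r S s U : steiner_rooted_k_arc_connected tl hd k r S ->
  s \in S -> s_cut r s U -> k <= dout tl hd U.
Proof.
move=> hc sS /andP [rU sU].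
have [P [hp hd']] := hc s sS.
have ex : forall i, exists a, (a \in P i) && ((tl a \in U) && (hd a \notin U)).
  move=> i; have /andP [hw _] := hp i.
  by have [a ha hb] := @walk_cross U _ _ _ hw rU sU; exists a; rewrite ha hb.
pose g := fun i => xchoose (ex i).
have gP : forall i, (g i \in P i) && ((tl (g i) \in U) && (hd (g i) \notin U)).
  by move=> i; apply: (xchooseP (ex i)).
have ginj : injective g.
  move=> i j e; apply/eqP; apply/negP => /negP ne.
  have /andP [gi _] := gP i; have /andP [gj _] := gP j.
  by move: (hd' i j ne _ gi); rewrite e gj.
have : #|g @: [set: 'I_k]| = k by rewrite (card_imset _ ginj) cardsT card_ord.
move=> <-; rewrite /dout; apply: subset_leq_card; apply/subsetP => a.
by case/imsetP => i _ ->; rewrite inE; case/andP: (gP i).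
Qed.

Lemma tight2 k r S s X Y : steiner_rooted_k_arc_connected tl hd k r S ->
  s \in S -> tight_s_cut tl hd k r s X -> tight_s_cut tl hd k r s Y ->
  tight_s_cut tl hd k r s (X :&: Y) /\ tight_s_cut tl hd k r s (X :|: Y).
Proof.
move=> hc sS /andP [/andP [rX sX] /eqP dX] /andP [/andP [rY sY] /eqP dY].
have c1 : s_cut r s (X :&: Y) by by rewrite /s_cut !inE rX rY (negbTE sX).
have c2 : s_cut r s (X :|: Y) by by rewrite /s_cut !inE rX (negbTE sX) (negbTE sY).
have l1 := cut_lb hc sS c1; have l2 := cut_lb hc sS c2.
have := dout_sub X Y; rewrite dX dY => h.
rewrite /tight_s_cut c1 c2 /=; split; apply/eqP.
  by apply/eqP; rewrite eqn_leq l1 andbT -(leq_add2r (dout tl hd (X :|: Y)));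
     apply: leq_trans h _; rewrite leq_add2l.
by apply/eqP; rewrite eqn_leq l2 andbT -(leq_add2l (dout tl hd (X :&: Y)));
   apply: leq_trans h _; rewrite leq_add2r.
Qed.

Lemma tight_fam k r S s (I : finType) (P : {pred I}) (f : I -> {set V}) i0 :
  steiner_rooted_k_arc_connected tl hd k r S -> s \in S -> P i0 ->
  (forall i, P i -> tight_s_cut tl hd k r s (f i)) ->
  tight_s_cut tl hd k r s (\bigcap_(i | P i) f i) /\
  tight_s_cut tl hd k r s (\bigcup_(i | P i) f i).
Proof.
move=> hc sS Pi0 hf; have t0 := hf _ Pi0.
split.
  have -> : \bigcap_(i | P i) f i = f i0 :&: \bigcap_(i | P i) f i.
    by apply/esym/setIidPr; exact: (bigcap_inf i0 Pi0).
  apply: (big_ind (fun X => tight_s_cut tl hd k r s (f i0 :&: X))).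
  - by rewrite setIT.
  - move=> X Y hX hY; have [h _] := tight2 hc sS hX hY.
    by rewrite setIACA setIid in h.
  - by move=> i Pi; have [h _] := tight2 hc sS t0 (hf _ Pi).
have -> : \bigcup_(i | P i) f i = f i0 :|: \bigcup_(i | P i) f i.
  by apply/esym/setUidPr; exact: (bigcup_sup i0 Pi0).
apply: (big_ind (fun X => tight_s_cut tl hd k r s (f i0 :|: X))).
- by rewrite setU0.
- move=> X Y hX hY; have [_ h] := tight2 hc sS hX hY.
  by rewrite setUACA setUid in h.
- by move=> i Pi; have [_ h] := tight2 hc sS t0 (hf _ Pi).
Qed.

End Aux.

Theorem lemma2p9 (V A : finType) (tl hd : A -> V) (k : nat) (r : V) (S : {set V}) :
  r \notin S ->
  steiner_rooted_k_arc_connected tl hd k r S ->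
  (* (a) *)
  (forall (s : V) (F : {set {set V}}),
      s \in S -> F != set0 ->
      (forall U, U \in F -> tight_s_cut tl hd k r s U) ->
      tight_s_cut tl hd k r s (\bigcap_(U in F) U) /\
      tight_s_cut tl hd k r s (\bigcup_(U in F) U)) /\
  (* (b) *)
  (forall (S' : {set V}) (U : V -> {set V}) (s0 : V),
      S' \subset S -> s0 \in S' ->
      (forall s, s \in S' -> tight_s_cut tl hd k r s (U s)) ->
      (forall s, s \in S' :\ s0 -> k <= dout tl hd (U s :|: U s0)) ->
      forall s, s \in S' -> tight_s_cut tl hd k r s (\bigcap_(t in S') U t)).
Proof.
move=> _ hc; split.
  move=> s F sS /set0Pn [U0 U0F] hF.
  exact: (tight_fam (f := id) hc sS U0F hF).
move=> S' U s0 sub s0S hU hge s sS'.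
have s0SS : s0 \in S by apply: (subsetP sub).
have hY : forall t, t \in S' -> tight_s_cut tl hd k r s0 (U t :&: U s0).
  move=> t tS; case: (eqVneq t s0) => [->|ne].
    by rewrite setIid; apply: hU.
  have /andP [/andP [rt st] /eqP dt] := hU t tS.
  have /andP [/andP [r0 s0n] /eqP d0] := hU s0 s0S.
  have c : s_cut r s0 (U t :&: U s0) by by rewrite /s_cut !inE rt r0 (negbTE s0n) andbF.
  have l := cut_lb hc s0SS c.
  have h := dout_sub tl hd (U t) (U s0).
  have tin : t \in S' :\ s0 by rewrite !inE ne tS.
  have g := hge t tin.
  rewrite /tight_s_cut c /= eqn_leq l andbT.
  rewrite -(leq_add2r (dout tl hd (U t :|: U s0))); apply: leq_trans h _.
  by rewrite dt d0 leq_add2l.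
have [h _] := tight_fam hc s0SS s0S hY.
have e : \bigcap_(t in S') (U t :&: U s0) = \bigcap_(t in S') U t.
  apply/setP => x; apply/bigcapP/bigcapP => H t tS.
    by have := H t tS; rewrite inE => /andP [].
  by rewrite inE H // H.
rewrite e in h.
have /andP [/andP [rW _] dW] := h.
have /andP [/andP [_ sn] _] := hU s sS'.
rewrite /tight_s_cut /s_cut rW dW /= andbT.
apply/negP => /bigcapP H; by rewrite (H s sS') in sn.
Qed.
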